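(* In the setting below, let $N=\lim_{t\to\infty}(S+tP)^{-1}$. If $r=0$ then $\|N\|_\infty=0$. If $r\ge1$, let $d=\sum_{i=1}^r|p_i-q_i|$; then $$\|N\|_\infty=\frac1\alpha+\frac{\ell}{\alpha(\alpha+\ell\gamma)}\max_{1\le i\le r}\frac{|p_i-q_i|\,(d-2|p_i-q_i|)}{p_i+q_i}.$$
   Context: Let $n\ge3$, $\ell>0$, $\alpha\ge(n-2)\ell$, $S=\alpha I_n+\ell\mathbf{1}_n\mathbf{1}_n^\top$. For a real matrix $P$, $\Delta_i(P)=|P_{ii}|-\sum_{j\ne i}|P_{ij}|$. A signless Laplacian is a real symmetric $n\times n$ matrix $P$ with $P_{ij}\in\{0,1\}$ for $i\ne j$, $P_{ii}\ge0$, and $\Delta_i(P)\in\{0,2\}$ for all $i$; its graph $G$ has vertex set $\{1,\dots,n\}$, an edge $\{i,j\}$ ($i\ne j$) whenever $P_{ij}=1$, and a self-loop $\{i,i\}$ whenever $\Delta_i(P)=2$ (graphs with self-loops are not bipartite). $r$ is the number of bipartite connected components $G_1,\dots,G_r$ of $G$, where $G_i$ has bipartition classes of sizes $p_i,q_i$; $\gamma=\sum_{i=1}^r\frac{(p_i-q_i)^2}{p_i+q_i}$. $\|A\|_\infty$ is the maximum absolute row sum. *)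

(* Defs.v *)
From HB Require Import structures.
From mathcomp Require Import all_boot all_order all_algebra.
Set Implicit Arguments. Unset Strict Implicit. Unset Printing Implicit Defensive.
Import Order.TTheory GRing.Theory Num.Theory.
Local Open Scope ring_scope.

Section Defs.
Variable R : realFieldType.
Variable n : nat.
Implicit Types (P A : 'M[R]_n) (C : {set 'I_n}).

Definition Smat (alpha l : R) : 'M[R]_n :=
  \matrix_(i, j) (alpha * (i == j)%:R + l).

Definition Delta P (i : 'I_n) : R :=
  `|P i i| - \sum_(j < n | j != i) `|P i j|.

Definition signless_laplacian P : Prop :=
  P^T = P /\
  (forall i j : 'I_n, i != j -> P i j = 0 \/ P i j = 1) /\
  (forall i : 'I_n, 0 <= P i i) /\
  (forall i : 'I_n, Delta P i = 0 \/ Delta P i = 2).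

Definition adj P : rel 'I_n := fun i j => (i != j) && (P i j == 1).
Definition has_loop P (i : 'I_n) : bool := Delta P i == 2.

Definition comp P (i : 'I_n) : {set 'I_n} := [set j | connect (adj P) i j].

Definition proper2 P C (c : {ffun 'I_n -> bool}) : bool :=
  [forall i in C, forall j in C, adj P i j ==> (c i != c j)].

Definition bipartiteb P C : bool :=
  [forall i in C, ~~ has_loop P i] && [exists c, proper2 P C c].

Definition bip_comps P : {set {set 'I_n}} :=
  [set C | [exists i, C == comp P i] & bipartiteb P C].

Definition rcount P : nat := #|bip_comps P|.

(* sizes of the two bipartition classes of C (w.r.t. a chosen colouring) *)
Definition pcl P C : nat :=
  if [pick c | proper2 P C c] is Some c then #|[set j in C | c j]| else 0.
Definition qcl P C : nat := #|C| - pcl P C.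

Definition absdiff P C : R := `|(pcl P C)%:R - (qcl P C)%:R|.

Definition gammaP P : R :=
  \sum_(C in bip_comps P) ((pcl P C)%:R - (qcl P C)%:R) ^+ 2 / (#|C|)%:R.

Definition dP P : R := \sum_(C in bip_comps P) absdiff P C.

Definition maxterm P C : R :=
  absdiff P C * (dP P - 2 * absdiff P C) / ((pcl P C + qcl P C)%N)%:R.

Definition norm_inf A : R := \big[Num.max/0]_(i < n) \sum_(j < n) `|A i j|.

Definition mx_lim_infty (F : R -> 'M[R]_n) (L : 'M[R]_n) : Prop :=
  forall eps : R, 0 < eps -> exists T : R, forall t : R, T < t ->
    forall i j : 'I_n, `|F t i j - L i j| < eps.

End Defs.

(* Main.v *)
Require Import Defs.
From HB Require Import structures.
From mathcomp Require Import all_boot all_order all_algebra.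
From mathcomp Require Import ring lra.
Import Order.TTheory GRing.Theory Num.Theory.
Local Open Scope ring_scope.
Set Implicit Arguments. Unset Strict Implicit. Unset Printing Implicit Defensive.

Lemma Psym (R : realFieldType) n (P : 'M[R]_n) : signless_laplacian P ->
  forall i j, P j i = P i j.
Proof. by case=> HT _ i j; rewrite -{1}HT mxE. Qed.

Lemma Poff (R : realFieldType) n (P : 'M[R]_n) : signless_laplacian P ->
  forall i j, i != j -> P i j = 0 \/ P i j = 1.
Proof. by case=> _ [H _]. Qed.

Lemma Poff_ge0 (R : realFieldType) n (P : 'M[R]_n) : signless_laplacian P ->
  forall i j, i != j -> 0 <= P i j.
Proof. by move=> HP i j /(Poff HP) [] ->. Qed.

Lemma adj_sym (R : realFieldType) n (P : 'M[R]_n) : signless_laplacian P ->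
  symmetric (adj P).
Proof. by move=> HP i j; rewrite /adj eq_sym (Psym HP). Qed.

Lemma csym (R : realFieldType) n (P : 'M[R]_n) : signless_laplacian P ->
  connect_sym (adj P).
Proof. by move=> HP; apply: sym_connect_sym; apply: adj_sym. Qed.

Lemma in_comp (R : realFieldType) n (P : 'M[R]_n) i j :
  (j \in Defs.comp P i) = connect (adj P) i j.
Proof. by rewrite inE. Qed.

Lemma comp_eq (R : realFieldType) n (P : 'M[R]_n) : signless_laplacian P ->
  forall i j, j \in Defs.comp P i -> Defs.comp P j = Defs.comp P i.
Proof.
move=> HP i j; rewrite in_comp => cij; apply/setP => k; rewrite !in_comp.
apply/idP/idP => H; first exact: connect_trans cij H.
by apply: connect_trans H; rewrite (csym HP).
Qed.

Lemma comp_self (R : realFieldType) n (P : 'M[R]_n) i : i \in Defs.comp P i.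
Proof. by rewrite in_comp connect0. Qed.

Lemma bip_comp (R : realFieldType) n (P : 'M[R]_n) : signless_laplacian P ->
  forall C u, C \in bip_comps P -> u \in C -> C = Defs.comp P u.
Proof.
move=> HP C u; rewrite inE => /andP [/existsP [i /eqP ->] _] Hu.
by rewrite (comp_eq HP Hu).
Qed.

Lemma bip_disj (R : realFieldType) n (P : 'M[R]_n) : signless_laplacian P ->
  forall C D u, C \in bip_comps P -> D \in bip_comps P -> u \in C -> u \in D -> C = D.
Proof. by move=> HP C D u HC HD HuC HuD; rewrite (bip_comp HP HC HuC) (bip_comp HP HD HuD). Qed.

Lemma comp_adj (R : realFieldType) n (P : 'M[R]_n) i a b :
  a \in Defs.comp P i -> adj P a b -> b \in Defs.comp P i.
Proof. rewrite !in_comp => H1 H2; apply: connect_trans H1 (connect1 H2). Qed.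

Lemma bip_adj (R : realFieldType) n (P : 'M[R]_n) : signless_laplacian P ->
  forall C a b, C \in bip_comps P -> a \in C -> adj P a b -> b \in C.
Proof.
move=> HP C a b HC Ha Hab; rewrite (bip_comp HP HC Ha); apply: comp_adj Hab.
exact: comp_self.
Qed.

Lemma conn_inv (R : realFieldType) n (P : 'M[R]_n) (A : {set 'I_n}) (f : 'I_n -> R) :
  (forall a b, a \in A -> adj P a b -> b \in A /\ f b = f a) ->
  forall u v, u \in A -> connect (adj P) u v -> f v = f u.
Proof.
move=> H u v Hu /connectP [p]; elim: p u Hu => [|x p IH] u Hu /=; first by move=> _ ->.
case/andP => Hux Hp Hv; have [HxA Hfx] := H _ _ Hu Hux.
by rewrite (IH x HxA Hp Hv) Hfx.
Qed.

Definition qf (R : realFieldType) n (P : 'M[R]_n) (x : 'I_n -> R) : R :=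
  \sum_i \sum_j x i * P i j * x j.

Definition offE (R : realFieldType) n (P : 'M[R]_n) (x : 'I_n -> R) : R :=
  \sum_i \sum_(j | j != i) P i j * (x i + x j) ^+ 2.

Lemma Pdiag (R : realFieldType) n (P : 'M[R]_n) : signless_laplacian P ->
  forall i, P i i = Delta P i + \sum_(j | j != i) P i j.
Proof.
move=> HP i; rewrite /Delta ger0_norm; last by case: HP => _ [_ [H _]].
have -> : \sum_(j | j != i) `|P i j| = \sum_(j | j != i) P i j.
  apply: eq_bigr => j ji; rewrite ger0_norm //.
  by apply: (Poff_ge0 HP); rewrite eq_sym.
by rewrite subrK.
Qed.

Lemma qf_ident (R : realFieldType) n (P : 'M[R]_n) : signless_laplacian P ->
  forall x, 2 * qf P x = 2 * \sum_i Delta P i * x i ^+ 2 + offE P x.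
Proof.
move=> HP x.
have E1 : offE P x = \sum_i \sum_(j | j != i) P i j * x i ^+ 2
     + \sum_i \sum_(j | j != i) P i j * x j ^+ 2
     + 2 * \sum_i \sum_(j | j != i) x i * P i j * x j.
  rewrite /offE mulr_sumr -!big_split /=; apply: eq_bigr => i _.
  rewrite mulr_sumr -!big_split /=; apply: eq_bigr => j _.
  by rewrite sqrrD; ring.
have E2 : \sum_i \sum_(j | j != i) P i j * x j ^+ 2 =
          \sum_i \sum_(j | j != i) P i j * x i ^+ 2.
  have F : forall F : 'I_n -> 'I_n -> R, \sum_i \sum_(j | j != i) F i j =
      \sum_i \sum_j (j != i)%:R * F i j.
    move=> F; apply: eq_bigr => i _; rewrite big_mkcond /=; apply: eq_bigr => j _.
    by case: (j != i); rewrite ?mul1r ?mul0r.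
  rewrite !F exchange_big /=; apply: eq_bigr => i _; apply: eq_bigr => j _.
  by rewrite eq_sym (Psym HP).
have E3 : qf P x = \sum_i P i i * x i ^+ 2
          + \sum_i \sum_(j | j != i) x i * P i j * x j.
  rewrite /qf -big_split /=; apply: eq_bigr => i _.
  by rewrite (bigD1 i) //= expr2; congr (_ + _); ring.
rewrite E1 E2 E3.
have E4 : \sum_i P i i * x i ^+ 2 = \sum_i Delta P i * x i ^+ 2 +
     \sum_i \sum_(j | j != i) P i j * x i ^+ 2.
  rewrite -big_split /=; apply: eq_bigr => i _.
  by rewrite (Pdiag HP) mulrDl -mulr_suml.
rewrite E4; ring.
Qed.

Lemma Delta_ge0 (R : realFieldType) n (P : 'M[R]_n) : signless_laplacian P ->
  forall i, 0 <= Delta P i.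
Proof. by case=> _ [_ [_ H]] i; case: (H i) => ->. Qed.

Lemma offE_ge0 (R : realFieldType) n (P : 'M[R]_n) : signless_laplacian P ->
  forall x, 0 <= offE P x.
Proof.
move=> HP x; apply: sumr_ge0 => i _; apply: sumr_ge0 => j ji.
by apply: mulr_ge0; [apply: (Poff_ge0 HP); rewrite eq_sym | apply: sqr_ge0].
Qed.

Lemma qf_ge0 (R : realFieldType) n (P : 'M[R]_n) : signless_laplacian P ->
  forall x, 0 <= qf P x.
Proof.
move=> HP x.
have H : 0 <= 2 * qf P x.
  rewrite qf_ident //; apply: addr_ge0; last exact: offE_ge0.
  apply: mulr_ge0 => //; apply: sumr_ge0 => i _.
  by apply: mulr_ge0; [apply: Delta_ge0 | apply: sqr_ge0].
by rewrite -(pmulr_rge0 _ (ltr0Sn _ 1)).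
Qed.

Lemma qf0_edge (R : realFieldType) n (P : 'M[R]_n) : signless_laplacian P ->
  forall x, qf P x = 0 -> forall i j, adj P i j -> x j = - x i.
Proof.
move=> HP x H0 i j /andP [ij /eqP Pij].
have A : 0 <= \sum_i Delta P i * x i ^+ 2.
  apply: sumr_ge0 => k _; by apply: mulr_ge0; [apply: Delta_ge0 | apply: sqr_ge0].
have B := offE_ge0 HP x.
have C := qf_ident HP x; rewrite H0 mulr0 in C.
have D : offE P x = 0.
  apply/eqP; rewrite eq_le B andbT.
  have : 0 <= 2 * \sum_i Delta P i * x i ^+ 2 by apply: mulr_ge0.
  move: C; move: (2 * _) => a C Ha; rewrite -(addKr a (offE P x)) -C.
  by rewrite addr0 oppr_le0.
have Hpos : forall k, true -> 0 <= \sum_(m | m != k) P k m * (x k + x m) ^+ 2.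
  move=> k _; apply: sumr_ge0 => m mk.
  by apply: mulr_ge0; [apply: (Poff_ge0 HP); rewrite eq_sym | apply: sqr_ge0].
have D3 := psumr_eq0P Hpos D (isT : true) (i := i).
have Hpos2 : forall m, m != i -> 0 <= P i m * (x i + x m) ^+ 2.
  by move=> m mk; apply: mulr_ge0; [apply: (Poff_ge0 HP); rewrite eq_sym | apply: sqr_ge0].
have := psumr_eq0P Hpos2 D3 (i := j); rewrite eq_sym ij => /(_ isT); rewrite Pij mul1r.
by move/eqP; rewrite sqrf_eq0 addr_eq0 => /eqP ->; rewrite opprK.
Qed.

Lemma qf0_loop (R : realFieldType) n (P : 'M[R]_n) : signless_laplacian P ->
  forall x, qf P x = 0 -> forall i, has_loop P i -> x i = 0.
Proof.
move=> HP x H0 i /eqP Hl.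
have A : 0 <= \sum_i Delta P i * x i ^+ 2.
  apply: sumr_ge0 => k _; by apply: mulr_ge0; [apply: Delta_ge0 | apply: sqr_ge0].
have B := offE_ge0 HP x.
have C := qf_ident HP x; rewrite H0 mulr0 in C.
have D : \sum_i Delta P i * x i ^+ 2 = 0.
  apply/eqP; rewrite eq_le A andbT.
  have : 2 * \sum_i Delta P i * x i ^+ 2 <= 0.
    by move: C B; set S := \sum_i _; set E := offE P x; lra.
  by rewrite pmulr_rle0.
have Hpos : forall k, true -> 0 <= Delta P k * x k ^+ 2.
  by move=> k _; apply: mulr_ge0; [apply: Delta_ge0 | apply: sqr_ge0].
have := psumr_eq0P Hpos D (isT : true) (i := i); rewrite Hl.
by move/eqP; rewrite mulf_eq0 sqrf_eq0 pnatr_eq0 /= => /eqP.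
Qed.

Definition sgn (R : realFieldType) n (P : 'M[R]_n) (C : {set 'I_n}) (u : 'I_n) : R :=
  if [pick c | proper2 P C c] is Some c then (if c u then 1 else -1) else 0.

Definition zv (R : realFieldType) n (P : 'M[R]_n) (C : {set 'I_n}) : 'rV[R]_n :=
  \row_u (if u \in C then sgn P C u else 0).

Lemma bipP (R : realFieldType) n (P : 'M[R]_n) C : C \in bip_comps P ->
  (forall i, i \in C -> ~~ has_loop P i) /\
  exists c, [/\ proper2 P C c, (forall u, sgn P C u = if c u then 1 else -1) &
             pcl P C = #|[set j in C | c j]| ].
Proof.
rewrite inE => /andP [_ /andP [/forallP H1 /existsP [c0 Hc0]]]; split.
  by move=> i Hi; have := H1 i; rewrite Hi.
rewrite /sgn /pcl; case: pickP => [c Hc|]; last by move/(_ c0); rewrite Hc0.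
by exists c.
Qed.

Lemma sgn_sq (R : realFieldType) n (P : 'M[R]_n) C u : C \in bip_comps P ->
  sgn P C u * sgn P C u = 1.
Proof.
case/bipP=> _ [c [_ Hs _]]; rewrite Hs; case: (c u); rewrite ?mulr1 //.
by rewrite mulrNN mulr1.
Qed.

Lemma sgn_adj (R : realFieldType) n (P : 'M[R]_n) C a b : C \in bip_comps P ->
  a \in C -> b \in C -> adj P a b -> sgn P C b = - sgn P C a.
Proof.
case/bipP=> _ [c [Hc Hs _]] Ha Hb Hab; rewrite !Hs.
move: Hc; rewrite /proper2 => /forallP /(_ a); rewrite Ha /= => /forallP /(_ b); rewrite Hb Hab /=.
by case: (c a); case: (c b) => //= _; rewrite ?opprK.
Qed.

Lemma Delta0 (R : realFieldType) n (P : 'M[R]_n) : signless_laplacian P ->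
  forall i, ~~ has_loop P i -> Delta P i = 0.
Proof. by case=> _ [_ [_ H]] i; rewrite /has_loop; case: (H i) => ->; rewrite ?eqxx. Qed.

Lemma zvP (R : realFieldType) n (P : 'M[R]_n) : signless_laplacian P ->
  forall C, C \in bip_comps P -> zv P C *m P = 0.
Proof.
move=> HP C HC; apply/rowP => v; rewrite !mxE.
have [Hl _] := bipP HC.
case Hv : (v \in C).
  rewrite (bigD1 v) //= !mxE Hv.
  have E : \sum_(u | u != v) (zv P C) 0 u * P u v =
           \sum_(u | u != v) - sgn P C v * P v u.
    apply: eq_bigr => u uv; rewrite !mxE (Psym HP).
    have vu : v != u by rewrite eq_sym.
    have [->|P1] := Poff HP vu.
      by rewrite !mulr0.
    have Hadj : adj P v u by rewrite /adj eq_sym uv P1 eqxx.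
    have Hu : u \in C by apply: (bip_adj HP HC Hv Hadj).
    by rewrite Hu (sgn_adj HC Hv Hu Hadj) P1.
  rewrite E -mulr_sumr (Pdiag HP v) (Delta0 HP (Hl v Hv)) add0r.
  by rewrite mulNr addrN.
rewrite big1 // => u _; rewrite !mxE.
case Hu : (u \in C); last by rewrite mul0r.
have uv : u != v by apply/eqP => E; rewrite E Hv in Hu.
have [->|P1] := Poff HP uv; first by rewrite mulr0.
have Hadj : adj P u v by rewrite /adj uv P1 eqxx.
by rewrite (bip_adj HP HC Hu Hadj) in Hv.
Qed.

Lemma sum_zv (R : realFieldType) n (P : 'M[R]_n) C : C \in bip_comps P ->
  \sum_u zv P C 0 u = (pcl P C)%:R - (qcl P C)%:R.
Proof.
case/bipP=> _ [c [_ Hs Hp]].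
have Hle : (pcl P C <= #|C|)%N.
  by rewrite Hp; apply: subset_leq_card; apply/subsetP => x; rewrite inE => /andP [].
rewrite /qcl natrB // Hp.
have -> : \sum_u zv P C 0 u = \sum_(u in C) (2 * (c u)%:R - 1).
  rewrite [RHS]big_mkcond /=; apply: eq_bigr => u _; rewrite !mxE Hs.
  by case: (u \in C); case: (c u) => //=; rewrite ?mulr1 ?mulr0; ring.
rewrite sumrB sumr_const -mulr_sumr.
have -> : \sum_(u in C) ((c u)%:R : R) = \sum_(u in [set j in C | c j]) 1.
  rewrite big_mkcond [RHS]big_mkcond /=; apply: eq_bigr => u _; rewrite inE.
  by case: (u \in C); case: (c u).
by rewrite sumr_const; ring.
Qed.

Lemma dot_zv (R : realFieldType) n (P : 'M[R]_n) : signless_laplacian P ->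
  forall C D, C \in bip_comps P -> D \in bip_comps P ->
  \sum_u zv P C 0 u * zv P D 0 u = if C == D then (#|C|)%:R else 0.
Proof.
move=> HP C D HC HD; case: eqP => [<-|CD].
  have -> : (#|C|%:R : R) = \sum_(u in C) 1 by rewrite sumr_const.
  rewrite [RHS]big_mkcond /=; apply: eq_bigr => u _; rewrite !mxE.
  by case: (u \in C); rewrite ?mulr0 // sgn_sq.
apply: big1 => u _; rewrite !mxE.
case HuC : (u \in C); last by rewrite mul0r.
case HuD : (u \in D); last by rewrite mulr0.
by exfalso; apply: CD; exact: (bip_disj HP HC HD HuC HuD).
Qed.

Lemma ker_qf (R : realFieldType) n (P : 'M[R]_n) (x : 'rV[R]_n) :
  x *m P = 0 -> qf P (fun i => x 0 i) = 0.
Proof.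
move=> H; rewrite /qf exchange_big /=; apply: big1 => j _.
rewrite -mulr_suml.
have : (x *m P) 0 j = 0 by rewrite H mxE.
by rewrite mxE => ->; rewrite mul0r.
Qed.

Lemma ker_const (R : realFieldType) n (P : 'M[R]_n) : signless_laplacian P ->
  forall (x : 'rV[R]_n) C u v, x *m P = 0 -> C \in bip_comps P -> u \in C -> v \in C ->
  x 0 v * sgn P C v = x 0 u * sgn P C u.
Proof.
move=> HP x C u v Hx HC Hu Hv.
have Hq := ker_qf Hx.
have Hc : connect (adj P) u v by move: Hv; rewrite (bip_comp HP HC Hu) in_comp.
apply: (conn_inv (A := C) (P := P) (f := fun w => x 0 w * sgn P C w)) Hu _.
  move=> a b Ha Hab; have Hb := bip_adj HP HC Ha Hab; split => //.
  by rewrite (qf0_edge HP Hq Hab) (sgn_adj HC Ha Hb Hab) mulrNN.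
exact: Hc.
Qed.

Lemma ker_bip (R : realFieldType) n (P : 'M[R]_n) : signless_laplacian P ->
  forall (x : 'rV[R]_n) u, x *m P = 0 -> x 0 u != 0 -> Defs.comp P u \in bip_comps P.
Proof.
move=> HP x u Hx Hu.
have Hq := ker_qf Hx.
have Sq : forall w, w \in Defs.comp P u -> x 0 w ^+ 2 = x 0 u ^+ 2.
  move=> w; rewrite in_comp; apply: (conn_inv (A := Defs.comp P u) (P := P)
     (f := fun w => x 0 w ^+ 2)); last exact: comp_self.
  move=> a b Ha Hab; split; first exact: comp_adj Ha Hab.
  by rewrite (qf0_edge HP Hq Hab) sqrrN.
have Nz : forall w, w \in Defs.comp P u -> x 0 w != 0.
  move=> w /Sq E; apply/eqP => H0; move: E; rewrite H0 expr0n /= => /esym/eqP.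
  by rewrite sqrf_eq0 (negbTE Hu).
rewrite inE; apply/andP; split; first by apply/existsP; exists u.
apply/andP; split.
  apply/forallP => i; apply/implyP => Hi; apply/negP => Hl.
  by have := Nz i Hi; rewrite (qf0_loop HP Hq Hl) eqxx.
apply/existsP; exists [ffun w => 0 < x 0 w * x 0 u].
apply/forallP => a; apply/implyP => Ha; apply/forallP => b; apply/implyP => Hb.
apply/implyP => Hab; rewrite !ffunE (qf0_edge HP Hq Hab) mulNr oppr_gt0.
have : x 0 a * x 0 u != 0 by rewrite mulf_neq0 ?Nz // comp_self.
move: (x 0 a * x 0 u) => y y0.
by case: (ltgtP y 0) y0 => //; rewrite ?eqxx.
Qed.

Lemma ker_decomp (R : realFieldType) n (P : 'M[R]_n) : signless_laplacian P ->
  forall (x : 'rV[R]_n), x *m P = 0 ->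
  x = \sum_(C in bip_comps P)
        ((\sum_v x 0 v * zv P C 0 v) / (#|C|)%:R) *: zv P C.
Proof.
move=> HP x Hx; apply/rowP => u; rewrite summxE.
case HB : (Defs.comp P u \in bip_comps P).
  set C := Defs.comp P u.
  rewrite (bigD1 C) //= [X in _ = _ + X]big1 ?addr0; last first.
    move=> D /andP [HD DC]; rewrite !mxE.
    case HuD : (u \in D); last by rewrite mulr0.
    by move: DC; rewrite (bip_comp HP HD HuD) eqxx.
  rewrite !mxE comp_self.
  have Hu : u \in C by exact: comp_self.
  have -> : \sum_v x 0 v * zv P C 0 v = \sum_(v in C) x 0 u * sgn P C u.
    rewrite [RHS]big_mkcond /=; apply: eq_bigr => v _; rewrite !mxE.
    case Hv : (v \in C); last by rewrite mulr0.
    exact: (ker_const HP Hx HB Hu Hv).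
  rewrite sumr_const -[x 0 u * sgn P C u *+ _]mulr_natr.
  have c0 : (#|C|%:R : R) != 0.
    by rewrite pnatr_eq0 -lt0n; apply/card_gt0P; exists u.
  by rewrite mulfK // -mulrA sgn_sq // mulr1.
have -> : x 0 u = 0.
  by apply/eqP; apply: contraFT HB => H; exact: (ker_bip HP Hx H).
apply/esym; apply: big1 => D HD; rewrite !mxE.
case HuD : (u \in D); last by rewrite mulr0.
by move: HB; rewrite -(bip_comp HP HD HuD) HD.
Qed.

Definition mC (R : realFieldType) n (C : {set 'I_n}) : R := (#|C|)%:R.
Definition wC (R : realFieldType) n (P : 'M[R]_n) C : R := \sum_u zv P C 0 u.
Definition gam (R : realFieldType) n (P : 'M[R]_n) : R :=
  \sum_(C in bip_comps P) wC P C ^+ 2 / mC R C.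
Definition vv (R : realFieldType) n (P : 'M[R]_n) (i : 'I_n) : R :=
  \sum_(C in bip_comps P) wC P C / mC R C * zv P C 0 i.
Definition cc (R : realFieldType) n (P : 'M[R]_n) (l a : R) : R :=
  l / (a * (a + l * gam P)).
Definition Nm (R : realFieldType) n (P : 'M[R]_n) (l a : R) : 'M[R]_n :=
  \matrix_(i, j) (a^-1 * (\sum_(C in bip_comps P) zv P C 0 i * zv P C 0 j / mC R C)
                  - cc P l a * vv P i * vv P j).

Lemma mulN (R : realFieldType) n (P : 'M[R]_n) l a (y : 'rV[R]_n) j :
  (y *m Nm P l a) 0 j =
  a^-1 * (\sum_(C in bip_comps P) (\sum_i y 0 i * zv P C 0 i) * zv P C 0 j / mC R C)
  - cc P l a * (\sum_i y 0 i * vv P i) * vv P j.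
Proof.
rewrite mxE.
under eq_bigr do rewrite mxE mulrBr.
rewrite sumrB; congr (_ - _).
  rewrite mulr_sumr; under eq_bigr do rewrite mulr_sumr.
  under eq_bigr do rewrite mulr_sumr.
  rewrite exchange_big /=; apply: eq_bigr => C _.
  rewrite !mulr_suml mulr_sumr; apply: eq_bigr => i _; ring.
rewrite mulr_sumr mulr_suml; apply: eq_bigr => i _; ring.
Qed.

Lemma NmP (R : realFieldType) n (P : 'M[R]_n) l a : signless_laplacian P ->
  Nm P l a *m P = 0.
Proof.
move=> HP.
have Z : forall C, C \in bip_comps P -> forall j, \sum_k zv P C 0 k * P k j = 0.
  by move=> C HC j; have := zvP HP HC; move/rowP/(_ j); rewrite !mxE.
have V : forall j, \sum_k vv P k * P k j = 0.
  move=> j; rewrite /vv; under eq_bigr do rewrite mulr_suml.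
  rewrite exchange_big /=; apply: big1 => C HC.
  under eq_bigr do rewrite -mulrA.
  by rewrite -mulr_sumr Z // mulr0.
apply/matrixP => i j; rewrite !mxE.
under eq_bigr do rewrite mxE mulrBl.
rewrite sumrB.
have -> : \sum_k cc P l a * vv P i * vv P k * P k j = 0.
  by under eq_bigr do rewrite -mulrA; rewrite -mulr_sumr V mulr0.
rewrite subr0.
transitivity (a^-1 * \sum_(C in bip_comps P) zv P C 0 i / mC R C *
                       \sum_k zv P C 0 k * P k j); last first.
  by rewrite big1 ?mulr0 // => C HC; rewrite Z // mulr0.
rewrite (eq_bigr (fun k => \sum_(C in bip_comps P)
   a^-1 * (zv P C 0 i * zv P C 0 k / mC R C) * P k j)); last first.
  by move=> k _; rewrite mulr_sumr mulr_suml.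
rewrite exchange_big mulr_sumr; apply: eq_bigr => C _.
rewrite mulr_sumr mulr_sumr; apply: eq_bigr => k _; ring.
Qed.

Lemma mC_gt0 (R : realFieldType) n (P : 'M[R]_n) C : C \in bip_comps P -> 0 < mC R C.
Proof.
move=> HC; rewrite /mC ltr0n; apply/card_gt0P.
move: HC; rewrite inE => /andP [/existsP [i /eqP ->] _]; exists i; exact: comp_self.
Qed.

Lemma gam_ge0 (R : realFieldType) n (P : 'M[R]_n) : 0 <= gam P.
Proof.
apply: sumr_ge0 => C _; apply: divr_ge0; first exact: sqr_ge0.
by rewrite /mC ler0n.
Qed.

Lemma ySE (R : realFieldType) n (P : 'M[R]_n) l a D i :
  (zv P D *m Smat n a l) 0 i = a * zv P D 0 i + l * wC P D.
Proof.
rewrite /Smat /wC /zv !mxE mulr_sumr.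
under eq_bigr do rewrite !mxE mulrDr.
under [in RHS]eq_bigr do rewrite !mxE.
rewrite big_split /=; congr (_ + _); last by apply: eq_bigr => k _; rewrite mulrC.
rewrite (bigD1 i) //= eqxx mulr1 big1 ?addr0; first by rewrite mulrC.
by move=> k ki; rewrite (negbTE ki) mulr0 mulr0.
Qed.

Lemma zvSN (R : realFieldType) n (P : 'M[R]_n) l a : signless_laplacian P ->
  0 < a -> 0 < l ->
  forall D, D \in bip_comps P -> zv P D *m Smat n a l *m Nm P l a = zv P D.
Proof.
move=> HP a0 l0 D HD; apply/rowP => j; rewrite mulN.
set y := zv P D *m Smat n a l.
have S1 : forall C, C \in bip_comps P -> \sum_i y 0 i * zv P C 0 i =
    a * (if C == D then mC R D else 0) + l * wC P D * wC P C.
  move=> C HC; under eq_bigr do rewrite ySE mulrDl.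
  rewrite big_split /=; congr (_ + _).
    under eq_bigr do rewrite -mulrA. rewrite -mulr_sumr; under eq_bigr do rewrite mulrC.
    by rewrite (dot_zv HP HC HD) /mC; case: eqP => // ->.
  by rewrite -mulr_sumr.
have S2 : \sum_i y 0 i * vv P i = a * wC P D + l * wC P D * gam P.
  rewrite /vv; under eq_bigr do rewrite mulr_sumr.
  rewrite exchange_big /=.
  rewrite (eq_bigr (fun C => wC P C / mC R C * (a * (if C == D then mC R D else 0) +
            l * wC P D * wC P C))); last first.
    move=> C HC; rewrite -S1 // mulr_sumr; apply: eq_bigr => i _; ring.
  under eq_bigr do rewrite mulrDr.
  rewrite big_split /=; congr (_ + _).
    rewrite (bigD1 D) //= eqxx big1 ?addr0; last first.
      by move=> C /andP [_ /negbTE ->]; rewrite mulr0 mulr0.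
    have := mC_gt0 HD; rewrite lt0r => /andP [m0 _]; field => //.
  rewrite /gam [RHS]mulr_sumr; apply: eq_bigr => C _; rewrite expr2; ring.
rewrite S2.
have T1 : \sum_(C in bip_comps P) (\sum_i y 0 i * zv P C 0 i) * zv P C 0 j / mC R C
    = a * zv P D 0 j + l * wC P D * vv P j.
  rewrite (eq_bigr (fun C => (a * (if C == D then mC R D else 0) + l * wC P D * wC P C)
               * zv P C 0 j / mC R C)); last by move=> C HC; rewrite S1.
  under eq_bigr do rewrite mulrDl mulrDl.
  rewrite big_split /=; congr (_ + _).
    rewrite (bigD1 D) //= eqxx big1 ?addr0; last first.
      by move=> C /andP [_ /negbTE ->]; rewrite mulr0 !mul0r.
    have := mC_gt0 HD; rewrite lt0r => /andP [m0 _]; field => //.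
  rewrite /vv [RHS]mulr_sumr; apply: eq_bigr => C _; ring.
rewrite T1 /cc.
have g0 := gam_ge0 P.
have H1 : a + l * gam P != 0.
  by have := mulr_ge0 (ltW l0) g0; move=> H; apply: lt0r_neq0; lra.
have H2 : a != 0 by rewrite lt0r_neq0.
by field; rewrite H2 H1.
Qed.

Lemma rowspace_perp (F : fieldType) n m (P : 'M[F]_n) (G : 'M[F]_(m, n)) :
  P^T = P -> (forall x : 'rV[F]_n, x *m P = 0 -> G *m x^T = 0) -> (G <= P)%MS.
Proof.
move=> HT HG.
set K := kermx P.
have KP : K *m P = 0 by apply/sub_kermxP; exact: submx_refl.
set W := kermx K^T.
have GW : (G <= W)%MS.
  apply/sub_kermxP; apply/matrixP => i j.
  have Hr : row j K *m P = 0 by rewrite -row_mul KP; apply/rowP => k; rewrite !mxE.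
  have := HG _ Hr; move/matrixP/(_ i 0) => H.
  have E : (G *m K^T) i j = (G *m (row j K)^T) i 0.
    by rewrite !mxE; apply: eq_bigr => k _; rewrite !mxE.
  by rewrite E H !mxE.
have PW : (P <= W)%MS.
  by apply/sub_kermxP; rewrite -{1}HT -trmx_mul KP trmx0.
have rW : \rank W = \rank P.
  rewrite /W mxrank_ker mxrank_tr /K mxrank_ker subKn //; exact: rank_leq_row.
apply: submx_trans GW _.
by rewrite -(mxrank_leqif_sup PW).2 rW eqxx.
Qed.

Lemma S_tr (R : realFieldType) n (a l : R) : (Smat n a l)^T = Smat n a l.
Proof. by apply/matrixP => i j; rewrite !mxE eq_sym. Qed.

Lemma N_tr (R : realFieldType) n (P : 'M[R]_n) l a : (Nm P l a)^T = Nm P l a.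
Proof.
apply/matrixP => i j; rewrite !mxE; congr (_ * _ - _); last by ring.
by apply: eq_bigr => C _; ring.
Qed.

Lemma ker_SN (R : realFieldType) n (P : 'M[R]_n) l a : signless_laplacian P ->
  0 < a -> 0 < l ->
  forall x : 'rV[R]_n, x *m P = 0 -> x *m Smat n a l *m Nm P l a = x.
Proof.
move=> HP a0 l0 x Hx; have E := ker_decomp HP Hx.
rewrite {1}E [RHS]E !mulmx_suml; apply: eq_bigr => C HC.
by rewrite -!scalemxAl zvSN.
Qed.

Lemma G_sub (R : realFieldType) n (P : 'M[R]_n) l a : signless_laplacian P ->
  0 < a -> 0 < l ->
  exists Y : 'M[R]_n, 1%:M - Nm P l a *m Smat n a l = Y *m P.
Proof.
move=> HP a0 l0; apply/submxP; apply: rowspace_perp; first by case: HP.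
move=> x Hx; rewrite mulmxBl mul1mx.
have : (x *m Smat n a l *m Nm P l a)^T = x^T by rewrite ker_SN.
by rewrite !trmx_mul N_tr S_tr mulmxA => ->; rewrite subrr.
Qed.

Lemma qfE (R : realFieldType) n (A : 'M[R]_n) (x : 'rV[R]_n) :
  (x *m A *m x^T) 0 0 = qf A (fun i => x 0 i).
Proof.
rewrite mxE /qf exchange_big /=; apply: eq_bigr => j _.
rewrite !mxE mulr_suml; apply: eq_bigr => i _; by rewrite ?mxE.
Qed.

Lemma qf_lin (R : realFieldType) n (A B : 'M[R]_n) t x :
  qf (A + t *: B) x = qf A x + t * qf B x.
Proof.
rewrite /qf mulr_sumr -big_split /=; apply: eq_bigr => i _.
rewrite mulr_sumr -big_split /=; apply: eq_bigr => j _; rewrite !mxE; ring.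
Qed.

Lemma qfS (R : realFieldType) n (a l : R) x :
  qf (Smat n a l) x = a * \sum_i x i ^+ 2 + l * (\sum_i x i) ^+ 2.
Proof.
rewrite /qf expr2 mulr_suml mulr_sumr mulr_sumr -big_split /=.
apply: eq_bigr => i _.
have E : forall j, x i * Smat n a l i j * x j = a * ((i == j)%:R * (x i * x j)) + l * (x i * x j).
  by move=> j; rewrite mxE; ring.
under eq_bigr do rewrite E.
rewrite big_split /= -mulr_sumr -mulr_sumr mulr_sumr; congr (_ + _).
rewrite (bigD1 i) //= eqxx mul1r big1 ?addr0 ?expr2 // => j ji.
  by rewrite eq_sym (negbTE ji) /= mul0r mulr0.
by rewrite -mulr_sumr.
Qed.

Lemma qfM_lb (R : realFieldType) n (P : 'M[R]_n) (a l t : R) : signless_laplacian P ->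
  0 <= l -> 0 <= t -> forall x,
  a * \sum_i x i ^+ 2 <= qf (Smat n a l + t *: P) x.
Proof.
move=> HP l0 t0 x; rewrite qf_lin qfS.
have := qf_ge0 HP x; have := sqr_ge0 (\sum_i x i).
move: (qf P x) (\sum_i x i) => q s H1 H2.
have : 0 <= l * s ^+ 2 by apply: mulr_ge0.
have : 0 <= t * q by apply: mulr_ge0.
lra.
Qed.

Lemma sumsq0 (R : realFieldType) n (x : 'rV[R]_n) :
  \sum_i x 0 i ^+ 2 = 0 -> x = 0.
Proof.
move=> H; apply/rowP => i; rewrite mxE.
have := psumr_eq0P (fun i _ => sqr_ge0 (x 0 i)) H (i := i) isT.
by move/eqP; rewrite sqrf_eq0 => /eqP.
Qed.

Lemma M_unit (R : realFieldType) n (P : 'M[R]_n) (a l t : R) : signless_laplacian P ->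
  0 < a -> 0 <= l -> 0 <= t -> Smat n a l + t *: P \in unitmx.
Proof.
move=> HP a0 l0 t0; rewrite -row_free_unit -kermx_eq0; apply/rowV0P => v /sub_kermxP Hv.
apply: sumsq0.
have := @qfM_lb _ _ P a l t HP l0 t0 (fun i => v 0 i).
rewrite -qfE Hv mul0mx mxE => H.
apply/eqP; rewrite eq_le sumr_ge0 ?andbT => [|i _]; last exact: sqr_ge0.
by rewrite -(pmulr_rle0 _ a0).
Qed.

Lemma abs_le (R : realFieldType) (x : R) : `|x| <= 1 + x ^+ 2.
Proof.
have := real_normK (num_real x); have := normr_ge0 x.
move: `|x| => b H1 H2; rewrite -H2; nra.
Qed.

Lemma inv_bound (R : realFieldType) n (P : 'M[R]_n) (a l t : R) : signless_laplacian P ->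
  0 < a -> 0 <= l -> 0 <= t -> forall (y : 'rV[R]_n) j,
  `|(y *m invmx (Smat n a l + t *: P)) 0 j| <= 1 + \sum_k y 0 k ^+ 2 / a ^+ 2.
Proof.
move=> HP a0 l0 t0 y j.
set M := Smat n a l + t *: P.
have HU : M \in unitmx by apply: M_unit.
set x := y *m invmx M.
have Hxy : x *m M = y by rewrite /x mulmxKV.
have H1 := @qfM_lb _ _ P a l t HP l0 t0 (fun i => x 0 i).
rewrite -/M -qfE Hxy in H1.
have H2 : (y *m x^T) 0 0 = \sum_i x 0 i * y 0 i.
  by rewrite mxE; apply: eq_bigr => i _; rewrite mxE mulrC.
rewrite H2 in H1.
have H3 : \sum_i x 0 i * y 0 i <= \sum_i (a / 2 * x 0 i ^+ 2 + y 0 i ^+ 2 / (2 * a)).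
  apply: ler_sum => i _.
  have := sqr_ge0 (a * x 0 i - y 0 i).
  move: (x 0 i) (y 0 i) => u v H.
  rewrite -subr_ge0.
  have -> : a / 2 * u ^+ 2 + v ^+ 2 / (2 * a) - u * v = (a * u - v) ^+ 2 / (2 * a).
    by field; rewrite lt0r_neq0.
  by apply: divr_ge0 => //; apply: mulr_ge0 => //; apply: ltW.
rewrite big_split /= -mulr_sumr -mulr_suml in H3.
have H4 : x 0 j ^+ 2 <= \sum_i x 0 i ^+ 2.
  rewrite (bigD1 j) //= lerDl; apply: sumr_ge0 => i _; exact: sqr_ge0.
have H5 : \sum_i x 0 i ^+ 2 <= \sum_k y 0 k ^+ 2 / a ^+ 2.
  rewrite -mulr_suml.
  move: H1 H3; move: (\sum_i x 0 i ^+ 2) (\sum_i y 0 i ^+ 2) (\sum_i x 0 i * y 0 i).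
  move=> X Y Z H1 H3.
  have HY : Y / (2 * a) = (Y / a ^+ 2) * (a / 2) by field; rewrite lt0r_neq0.
  rewrite HY in H3.
  have Ha2 : 0 < a / 2 by apply: divr_gt0.
  rewrite -(ler_pM2r Ha2); nra.
apply: le_trans (abs_le _) _; rewrite lerD2l; exact: le_trans H4 H5.
Qed.

Lemma inv_diff (R : realFieldType) n (P : 'M[R]_n) (a l t : R) (Y : 'M[R]_n) :
  signless_laplacian P -> 0 < a -> 0 < l -> 0 < t ->
  1%:M - Nm P l a *m Smat n a l = Y *m P ->
  invmx (Smat n a l + t *: P) - Nm P l a =
  t^-1 *: (Y - Y *m Smat n a l *m invmx (Smat n a l + t *: P)).
Proof.
move=> HP a0 l0 t0 HY.
set S := Smat n a l; set M := S + t *: P; set N := Nm P l a.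
have HU : M \in unitmx by apply: M_unit => //; apply: ltW.
have NM : N *m M = N *m S by rewrite /M mulmxDr -scalemxAr NmP // scaler0 addr0.
have E1 : invmx M - N = (1%:M - N *m M) *m invmx M.
  by rewrite mulmxBl mul1mx -mulmxA mulmxV // mulmx1.
have PE : P = t^-1 *: (M - S).
  by rewrite /M [S + _]addrC addrK scalerA mulVf ?scale1r // lt0r_neq0.
rewrite E1 NM HY PE -scalemxAr -scalemxAl mulmxBr mulmxBl -[Y *m M *m _]mulmxA mulmxV // mulmx1.
by [].
Qed.

Lemma lim_main (R : realFieldType) n (P : 'M[R]_n) (a l : R) :
  signless_laplacian P -> 0 < a -> 0 < l ->
  mx_lim_infty (fun t : R => invmx (Smat n a l + t *: P)) (Nm P l a).
Proof.
move=> HP a0 l0 eps e0.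
have [Y HY] := G_sub HP a0 l0.
set YS := Y *m Smat n a l.
set B := \sum_i \sum_j `|Y i j| + (1 + \sum_i \sum_k YS i k ^+ 2 / a ^+ 2).
have B0 : 0 <= B.
  apply: addr_ge0; first by apply: sumr_ge0 => i _; apply: sumr_ge0 => j _.
  apply: addr_ge0 => //; apply: sumr_ge0 => i _; apply: sumr_ge0 => k _.
  by apply: divr_ge0; apply: sqr_ge0.
exists (B / eps) => t Ht i j.
have t0 : 0 < t by apply: le_lt_trans Ht; apply: divr_ge0 => //; apply: ltW.
set M := Smat n a l + t *: P.
have D := inv_diff HP a0 l0 t0 HY.
have -> : invmx M i j - Nm P l a i j = (invmx M - Nm P l a) i j by rewrite !mxE.
rewrite D mxE mxE mxE.
have H1 : `|Y i j| <= \sum_i \sum_j `|Y i j|.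
  rewrite (bigD1 i) //= (bigD1 j) //= -addrA lerDl.
  apply: addr_ge0; first by apply: sumr_ge0.
  by apply: sumr_ge0 => k _; apply: sumr_ge0.
have H2 : `|(YS *m invmx M) i j| <= 1 + \sum_i \sum_k YS i k ^+ 2 / a ^+ 2.
  have -> : (YS *m invmx M) i j = (row i YS *m invmx M) 0 j by rewrite -row_mul [RHS]mxE.
  apply: le_trans (@inv_bound _ _ P a l t HP a0 (ltW l0) (ltW t0) (row i YS) j) _.
  rewrite lerD2l.
  have -> : \sum_k row i YS 0 k ^+ 2 / a ^+ 2 = \sum_k YS i k ^+ 2 / a ^+ 2.
    by apply: eq_bigr => k _; rewrite mxE.
  rewrite [X in _ <= X](bigD1 i) //= lerDl; apply: sumr_ge0 => m _; apply: sumr_ge0 => k _.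
  by apply: divr_ge0; apply: sqr_ge0.
have H3 := ler_normB (Y i j) ((YS *m invmx M) i j).
rewrite mulrC -/M -/YS.
rewrite normrM [`|t^-1|]ger0_norm ?invr_ge0 ?(ltW t0) // ltr_pdivrMr //.
move: Ht; rewrite ltr_pdivrMr // => Ht.
have : B = \sum_i \sum_j `|Y i j| + (1 + \sum_i \sum_k YS i k ^+ 2 / a ^+ 2) by [].
move: H1 H2 H3 Ht; set u := `|_ - _|; set v := `|Y i j|; set w := `|(_ *m _) i j|.
move=> H1 H2 H3 Ht HB; nra.
Qed.

Lemma zv_out (R : realFieldType) n (P : 'M[R]_n) (C : {set 'I_n}) u : u \notin C -> zv P C 0 u = 0.
Proof. by move=> H; rewrite mxE (negbTE H). Qed.

Lemma zv_abs (R : realFieldType) n (P : 'M[R]_n) (C : {set 'I_n}) u : C \in bip_comps P -> u \in C ->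
  `|zv P C 0 u| = 1.
Proof.
move=> HC Hu; rewrite mxE Hu; case/bipP: HC => _ [c [_ -> _]].
by case: (c u); rewrite ?normrN normr1.
Qed.

Lemma sum_bip_at (R : realFieldType) n (P : 'M[R]_n) : signless_laplacian P ->
  forall C u (F : {set 'I_n} -> R), C \in bip_comps P -> u \in C ->
  (forall D, D \in bip_comps P -> u \notin D -> F D = 0) ->
  \sum_(D in bip_comps P) F D = F C.
Proof.
move=> HP C u F HC Hu HF; rewrite (bigD1 C) //= big1 ?addr0 // => D /andP [HD DC].
apply: HF => //; apply/negP => HuD; move/eqP: DC; apply.
exact: (bip_disj HP HD HC HuD Hu).
Qed.

Lemma vv_in (R : realFieldType) n (P : 'M[R]_n) : signless_laplacian P ->
  forall C u, C \in bip_comps P -> u \in C -> vv P u = wC P C / mC R C * zv P C 0 u.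
Proof.
move=> HP C u HC Hu; rewrite /vv (sum_bip_at HP (F := fun D => wC P D / mC R D * zv P D 0 u) HC Hu) //.
by move=> D _ HD; rewrite zv_out ?mulr0.
Qed.

Lemma vv_out (R : realFieldType) n (P : 'M[R]_n) u :
  (forall D, D \in bip_comps P -> u \notin D) -> vv P u = 0.
Proof. by move=> H; rewrite /vv big1 // => D HD; rewrite zv_out ?mulr0 // H. Qed.

Lemma N_out (R : realFieldType) n (P : 'M[R]_n) l a u v :
  (forall D, D \in bip_comps P -> u \notin D) -> Nm P l a u v = 0.
Proof.
move=> H; rewrite mxE vv_out // mulr0 mul0r subr0 big1 ?mulr0 // => D HD.
by rewrite zv_out ?mul0r // H.
Qed.

Lemma N_in (R : realFieldType) n (P : 'M[R]_n) l a : signless_laplacian P ->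
  forall C u v, C \in bip_comps P -> u \in C ->
  Nm P l a u v = zv P C 0 u * (a^-1 * zv P C 0 v / mC R C - cc P l a * (wC P C / mC R C) * vv P v).
Proof.
move=> HP C u v HC Hu; rewrite mxE (vv_in HP HC Hu).
rewrite (sum_bip_at HP (F := fun D => zv P D 0 u * zv P D 0 v / mC R D) HC Hu); first by ring.
by move=> D _ HD; rewrite zv_out ?mul0r.
Qed.

Lemma sum_abs_vv (R : realFieldType) n (P : 'M[R]_n) : signless_laplacian P ->
  \sum_v `|vv P v| = \sum_(D in bip_comps P) `|wC P D|.
Proof.
move=> HP.
have E : forall v, `|vv P v| = \sum_(D in bip_comps P) (if v \in D then `|wC P D| / mC R D else 0).
  move=> v; case: (boolP [exists D, (D \in bip_comps P) && (v \in D)]).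
    case/existsP => C /andP [HC Hv].
    rewrite (vv_in HP HC Hv) (sum_bip_at HP (F := fun D => if v \in D then `|wC P D| / mC R D else 0) HC Hv).
      rewrite Hv !normrM zv_abs // mulr1 normfV [`|mC R C|]ger0_norm //; exact: ltW (mC_gt0 HC).
    by move=> D _ HD; rewrite (negbTE HD).
  move=> H; have H' : forall D, D \in bip_comps P -> v \notin D.
    move=> D HD; apply/negP => Hv; move/negP: H; apply; apply/existsP; exists D; exact/andP.
  rewrite vv_out // normr0 big1 // => D HD; by rewrite (negbTE (H' D HD)).
rewrite (eq_bigr _ (fun v _ => E v)) exchange_big /=; apply: eq_bigr => D HD.
rewrite -big_mkcond /= sumr_const -mulr_natr mulfVK //.
by have := mC_gt0 HD; rewrite lt0r => /andP [].
Qed.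

Lemma cc_ge0 (R : realFieldType) n (P : 'M[R]_n) (l a : R) : 0 < a -> 0 < l -> 0 <= cc P l a.
Proof.
move=> a0 l0; rewrite /cc; apply: divr_ge0; first exact: ltW.
apply: mulr_ge0; first exact: ltW.
have := gam_ge0 P; have := mulr_ge0 (ltW l0) (gam_ge0 P); move=> *; lra.
Qed.

Lemma ccw_le (R : realFieldType) n (P : 'M[R]_n) (l a : R) C : 0 < a -> 0 < l ->
  C \in bip_comps P -> cc P l a * (wC P C ^+ 2 / mC R C) <= a^-1.
Proof.
move=> a0 l0 HC.
have H1 : wC P C ^+ 2 / mC R C <= gam P.
  rewrite /gam (bigD1 C) //= lerDl; apply: sumr_ge0 => D _.
  by apply: divr_ge0; [exact: sqr_ge0 | rewrite /mC ler0n].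
have H2 : cc P l a * gam P <= a^-1.
  rewrite /cc; have g0 := gam_ge0 P.
  have Hp : 0 < a + l * gam P by have := mulr_ge0 (ltW l0) g0; move=> *; lra.
  rewrite mulrAC ler_pdivrMr ?mulr_gt0 // mulrA mulVf ?lt0r_neq0 // mul1r.
  by have := mulr_ge0 (ltW l0) g0; move=> *; lra.
apply: le_trans H2; apply: ler_wpM2l => //; exact: cc_ge0.
Qed.

Lemma row_in (R : realFieldType) n (P : 'M[R]_n) (l a : R) : signless_laplacian P ->
  0 < a -> 0 < l -> forall C u, C \in bip_comps P -> u \in C ->
  \sum_v `|Nm P l a u v| = a^-1 + cc P l a *
     (`|wC P C| * (\sum_(D in bip_comps P) `|wC P D| - 2 * `|wC P C|) / mC R C).
Proof.
move=> HP a0 l0 C u HC Hu.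
have m0 := mC_gt0 HC.
have mne : mC R C != 0 by rewrite lt0r_neq0.
have ane : a != 0 by rewrite lt0r_neq0.
have k0 := cc_ge0 P a0 l0.
have Hk := ccw_le a0 l0 HC.
rewrite (bigID (fun v => v \in C)) /=.
have E1 : \sum_(v | v \in C) `|Nm P l a u v| =
          \sum_(v in C) ((a^-1 - cc P l a * (wC P C ^+ 2 / mC R C)) / mC R C).
  apply: eq_bigr => v Hv; rewrite (@N_in _ _ P l a HP C u v HC Hu) (vv_in HP HC Hv) normrM zv_abs // mul1r.
  have -> : a^-1 * zv P C 0 v / mC R C - cc P l a * (wC P C / mC R C) *
      (wC P C / mC R C * zv P C 0 v) = zv P C 0 v * ((a^-1 - cc P l a * (wC P C ^+ 2 / mC R C)) / mC R C).
    by field; rewrite ane andbT; exact: mne.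
  rewrite normrM zv_abs // mul1r ger0_norm //; apply: divr_ge0; last exact: ltW.
  by rewrite subr_ge0.
rewrite E1 sumr_const -[_ *+ #|C|]mulr_natr divfK //.
have E2 : \sum_(v | v \notin C) `|Nm P l a u v| =
          \sum_(v | v \notin C) (cc P l a * `|wC P C| / mC R C * `|vv P v|).
  apply: eq_bigr => v Hv; rewrite (@N_in _ _ P l a HP C u v HC Hu) (@zv_out _ _ P C v Hv) normrM zv_abs // mul1r.
  rewrite mulr0 mul0r sub0r normrN.
  have -> : cc P l a * (wC P C / mC R C) * vv P v = cc P l a / mC R C * (wC P C * vv P v) by ring.
  rewrite normrM (ger0_norm (divr_ge0 k0 (ltW m0))) normrM; ring.
rewrite E2 -mulr_sumr.
have E3 : \sum_(v | v \notin C) `|vv P v| = \sum_(D in bip_comps P) `|wC P D| - `|wC P C|.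
  have := sum_abs_vv HP; rewrite (bigID (fun v => v \in C)) /=.
  have -> : \sum_(v | v \in C) `|vv P v| = \sum_(v in C) (`|wC P C| / mC R C).
    apply: eq_bigr => v Hv; rewrite (vv_in HP HC Hv) !normrM zv_abs // mulr1 normfV.
    by rewrite [`|mC R C|]ger0_norm //; exact: ltW.
  rewrite sumr_const -[_ *+ #|C|]mulr_natr divfK // => <-; ring.
rewrite E3.
have -> : wC P C ^+ 2 = `|wC P C| ^+ 2 by rewrite real_normK // num_real.
by field; rewrite ?mne.
Qed.

Lemma absdiff_eq (R : realFieldType) n (P : 'M[R]_n) C : C \in bip_comps P ->
  absdiff P C = `|wC P C|.
Proof. by move=> HC; rewrite /absdiff /wC sum_zv. Qed.

Lemma pq_eq (R : realFieldType) n (P : 'M[R]_n) C : C \in bip_comps P ->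
  ((pcl P C + qcl P C)%N%:R : R) = mC R C.
Proof.
case/bipP=> _ [c [_ _ Hp]]; rewrite /qcl /mC subnKC // Hp.
by apply: subset_leq_card; apply/subsetP => x; rewrite inE => /andP [].
Qed.

Lemma dP_eq (R : realFieldType) n (P : 'M[R]_n) :
  dP P = \sum_(D in bip_comps P) `|wC P D|.
Proof. by apply: eq_bigr => D HD; rewrite absdiff_eq. Qed.

Lemma gam_eq (R : realFieldType) n (P : 'M[R]_n) : gam P = gammaP P.
Proof. by apply: eq_bigr => D HD; rewrite /wC sum_zv. Qed.

Lemma maxterm_eq (R : realFieldType) n (P : 'M[R]_n) C : C \in bip_comps P ->
  maxterm P C = `|wC P C| * (\sum_(D in bip_comps P) `|wC P D| - 2 * `|wC P C|) / mC R C.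
Proof. by move=> HC; rewrite /maxterm pq_eq // dP_eq absdiff_eq. Qed.

Lemma bip_nonempty (R : realFieldType) n (P : 'M[R]_n) C : C \in bip_comps P ->
  exists u, u \in C.
Proof.
rewrite inE => /andP [/existsP [i /eqP ->] _]; exists i; exact: comp_self.
Qed.

Unset Implicit Arguments. Set Strict Implicit.

Theorem corollary4p10 (R : realFieldType) (n : nat) (l alpha : R)
    (P : 'M[R]_n) :
  (3 <= n)%N -> 0 < l -> (n - 2)%:R * l <= alpha ->
  signless_laplacian P ->
  exists N : 'M[R]_n,
    mx_lim_infty (fun t : R => invmx (Smat n alpha l + t *: P)) N /\
    (rcount P = 0%N -> norm_inf N = 0) /\
    ((1 <= rcount P)%N ->
      exists2 C0, C0 \in bip_comps P &
        (forall C, C \in bip_comps P -> maxterm P C <= maxterm P C0) /\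
        norm_inf N = alpha^-1 + l / (alpha * (alpha + l * gammaP P)) * maxterm P C0).
Proof.
move=> n3 l0 la HP.
have a0 : 0 < alpha.
  apply: lt_le_trans la; apply: mulr_gt0 => //; by rewrite ltr0n subn_gt0.
exists (Nm P l alpha); split; first exact: lim_main.
have rowsum_in : forall C u, C \in bip_comps P -> u \in C ->
    \sum_v `|Nm P l alpha u v| = alpha^-1 + cc P l alpha * maxterm P C.
  by move=> C u HC Hu; rewrite (row_in HP a0 l0 HC Hu) maxterm_eq.
split.
  move=> r0; have B0 : bip_comps P = set0 by apply/eqP; rewrite -cards_eq0; apply/eqP.
  rewrite /norm_inf; apply: (big_ind (fun x => x = 0)) => //.
    by move=> x y -> ->; rewrite maxxx.
  move=> i _; apply: big1 => j _.
  by rewrite N_out ?normr0 // => D; rewrite B0 inE.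
move=> r1.
have [C1 HC1] : exists C, C \in bip_comps P.
  by apply/card_gt0P; rewrite -/(rcount P).
case: (arg_maxP (maxterm P) HC1) => C0 HC0 Hmax.
exists C0 => //; split; first by move=> C HC; apply: Hmax.
rewrite -gam_eq -/(cc P l alpha).
have [u0 Hu0] := bip_nonempty HC0.
have k0 := cc_ge0 P a0 l0.
apply/eqP; rewrite eq_le; apply/andP; split.
  apply/bigmax_leP; split.
    by rewrite -(rowsum_in _ _ HC0 Hu0); apply: sumr_ge0.
  move=> i _; case: (boolP [exists D, (D \in bip_comps P) && (i \in D)]).
    case/existsP => D /andP [HD Hi]; rewrite (rowsum_in _ _ HD Hi) lerD2l.
    by apply: ler_wpM2l => //; apply: Hmax.
  move=> H; rewrite big1.
    by rewrite -(rowsum_in _ _ HC0 Hu0); apply: sumr_ge0.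
  move=> j _; rewrite N_out ?normr0 // => D HD; apply/negP => Hi.
  by move/negP: H; apply; apply/existsP; exists D; apply/andP.
rewrite -(rowsum_in _ _ HC0 Hu0); exact: le_bigmax.
Qed.
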